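(* Let $X,Y$ be proper, geodesically complete $\mathrm{CAT}(-\kappa)$ spaces with height functions based at non-isolated boundary points, and let $G$ act geometrically on $X\bowtie Y$ (metric from an admissible monotone norm) by isometries of the form $(x,y)\mapsto(g_Xx,g_Yy)$. Suppose $G=\langle H,t\mid tst^{-1}=f(s),s\in H\rangle$ is an ascending HNN extension with $H$ finitely generated, $H\subseteq\ker(h)$ and $h(t)>0$, where $h:G\to\mathbb{R}$ is the height change homomorphism. Fix $x_0\in X$ with $h_X(x_0)=0$ and $D>0$. Then there is $C>0$ such that for every $x_1\in X$ with $|h_X(x_1)|\le D$ there are points $x_1=p_0,p_1,\dots,p_n=x_0$ in $X$ with $d_X(p_i,p_{i+1})<C$ and $h_X(p_i)\le0$ for all $i$.
   Context: $X\bowtie Y=\{(x,y):h_X(x)=-h_Y(y)\}$ with height $h(x,y)=h_X(x)$; the height change of $g\in G$ is $h(g)=h_X(g_Xx)-h_X(x)$, independent of $x$. Admissible monotone norm $N$: $N(1,1)=1$, $N(a,b)\ge(|a|+|b|)/2$, non-decreasing in each coordinate on $[0,\infty)^2$; the metric on $X\bowtie Y$ is the corresponding length metric. *)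

(* Defs.v *)
From Stdlib Require Import Reals List.
Open Scope R_scope.

Record metric_space := MetricSpace {
  mpt :> Type;
  mdist : mpt -> mpt -> R;
  mdist_refl : forall x, mdist x x = 0;
  mdist_sep : forall x y, mdist x y = 0 -> x = y;
  mdist_sym : forall x y, mdist x y = mdist y x;
  mdist_tri : forall x y z, mdist x z <= mdist x y + mdist y z
}.
Arguments mdist {m} _ _.

Section MetricNotions.
Variable X : metric_space.

Definition seq_converges (u : nat -> X) (l : X) : Prop :=
  forall eps, 0 < eps -> exists N, forall n, (N <= n)%nat -> mdist (u n) l < eps.

(** proper: closed balls are compact (Heine--Borel, sequential form) *)
Definition proper_space : Prop :=
  forall (x : X) (r : R) (u : nat -> X), (forall n, mdist x (u n) <= r) ->
    exists (phi : nat -> nat) (l : X),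
      (forall n, (phi n < phi (S n))%nat) /\ seq_converges (fun n => u (phi n)) l.

Definition geodesic_segment (sigma : R -> X) (a : R) : Prop :=
  forall s t, 0 <= s <= a -> 0 <= t <= a -> mdist (sigma s) (sigma t) = Rabs (s - t).

Definition geodesic_space : Prop :=
  forall p q : X, exists sigma, geodesic_segment sigma (mdist p q) /\
    sigma 0 = p /\ sigma (mdist p q) = q.

Definition geodesically_complete : Prop :=
  forall (sigma : R -> X) (a : R), 0 < a -> geodesic_segment sigma a ->
    exists l : R -> X, (forall s t, mdist (l s) (l t) = Rabs (s - t)) /\
      (forall s, 0 <= s <= a -> l s = sigma s).

(** CAT(-kappa), kappa > 0: geodesic space in which, for every geodesic triangle
    [p,q,r] and every point x on a side [p,q] at distance s from p,
    d(r,x) <= d(rbar,xbar) in the comparison triangle in the model plane of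
    curvature -kappa.  The comparison distance is given by the hyperbolic
    Stewart formula (multiplied out by sinh(k a) > 0), k = sqrt kappa:
      cosh(k d(rbar,xbar)) sinh(k a)
        = sinh(k (a - s)) cosh(k d(p,r)) + sinh(k s) cosh(k d(q,r)),
    a = d(p,q).  (Bridson--Haefliger II.1.7(4) variant.) *)
Definition CAT_neg (kappa : R) : Prop :=
  geodesic_space /\
  forall (p q r : X) (sigma : R -> X),
    let a := mdist p q in
    let k := sqrt kappa in
    0 < a -> geodesic_segment sigma a -> sigma 0 = p -> sigma a = q ->
    forall s, 0 <= s <= a ->
      cosh (k * mdist r (sigma s)) * sinh (k * a)
        <= sinh (k * (a - s)) * cosh (k * mdist p r)
           + sinh (k * s) * cosh (k * mdist q r).

Definition geodesic_ray (g : R -> X) : Prop :=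
  forall s t, 0 <= s -> 0 <= t -> mdist (g s) (g t) = Rabs (s - t).

Definition asymptotic (g e : R -> X) : Prop :=
  exists B, forall t, 0 <= t -> mdist (g t) (e t) <= B.

(** the boundary point represented by g is not isolated in the visual boundary
    (cone topology, basic neighbourhoods U(g, r, eps) of rays issuing from the
    base point g 0, Bridson--Haefliger II.8.6) *)
Definition nonisolated_boundary_point (g : R -> X) : Prop :=
  forall r eps, 0 < r -> 0 < eps ->
    exists e : R -> X, geodesic_ray e /\ e 0 = g 0 /\ ~ asymptotic g e /\
      mdist (e r) (g r) < eps.

(** h is a height function based at the (non-isolated) boundary point [g]:
    h = minus the Busemann function of a ray g, h(x) = lim_{t->oo} (t - d(x, g t)). *)
Definition height_function (h : X -> R) : Prop :=
  exists g : R -> X, geodesic_ray g /\ nonisolated_boundary_point g /\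
    forall x eps, 0 < eps -> exists T, forall t, T <= t ->
      Rabs (t - mdist x (g t) - h x) < eps.

End MetricNotions.

Definition admissible_monotone_norm (N : R -> R -> R) : Prop :=
  (forall a b, 0 <= N a b) /\
  (forall a b, N a b = 0 -> a = 0 /\ b = 0) /\
  (forall l a b, N (l * a) (l * b) = Rabs l * N a b) /\
  (forall a b c e, N (a + c) (b + e) <= N a b + N c e) /\
  N 1 1 = 1 /\
  (forall a b, (Rabs a + Rabs b) / 2 <= N a b) /\
  (forall a a' b, 0 <= a -> a <= a' -> 0 <= b -> N a b <= N a' b) /\
  (forall a b b', 0 <= a -> 0 <= b -> b <= b' -> N a b <= N a b').

Section Horocyclic.
Variables (X Y : metric_space) (hX : X -> R) (hY : Y -> R) (N : R -> R -> R).

Definition inZ (z : X * Y) : Prop := hX (fst z) = - hY (snd z).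

Definition dN (z w : X * Y) : R := N (mdist (fst z) (fst w)) (mdist (snd z) (snd w)).

Definition Zpath (c : R -> X * Y) : Prop :=
  (forall s, 0 <= s <= 1 -> inZ (c s)) /\
  forall s, 0 <= s <= 1 -> forall eps, 0 < eps -> exists delta, 0 < delta /\
    forall s', 0 <= s' <= 1 -> Rabs (s' - s) < delta -> dN (c s) (c s') < eps.

Fixpoint psum (f : nat -> R) (n : nat) : R :=
  match n with O => 0 | S m => psum f m + f m end.

Definition length_le (c : R -> X * Y) (L : R) : Prop :=
  forall (n : nat) (tau : nat -> R), tau O = 0 -> tau n = 1 ->
    (forall i, (i < n)%nat -> tau i <= tau (S i)) ->
    psum (fun i => dN (c (tau i)) (c (tau (S i)))) n <= L.

(** d_Z(z, w) < r, for the induced length metric d_Z *)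
Definition Zball (z w : X * Y) (r : R) : Prop :=
  exists (c : R -> X * Y) (L : R),
    Zpath c /\ c 0 = z /\ c 1 = w /\ L < r /\ length_le c L.

Definition Zconverges (u : nat -> X * Y) (l : X * Y) : Prop :=
  forall eps, 0 < eps -> exists M, forall n, (M <= n)%nat -> Zball l (u n) eps.

Definition Zcompact (K : X * Y -> Prop) : Prop :=
  (forall z, K z -> inZ z) /\
  forall u : nat -> X * Y, (forall n, K (u n)) ->
    exists (phi : nat -> nat) (l : X * Y), K l /\
      (forall n, (phi n < phi (S n))%nat) /\ Zconverges (fun n => u (phi n)) l.

End Horocyclic.

Definition is_group (G : Type) (mul : G -> G -> G) (one : G) (inv : G -> G) : Prop :=
  (forall a b c, mul a (mul b c) = mul (mul a b) c) /\
  (forall a, mul one a = a) /\ (forall a, mul a one = a) /\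
  (forall a, mul (inv a) a = one) /\ (forall a, mul a (inv a) = one).

Definition is_subgroup (G : Type) (mul : G -> G -> G) (one : G) (inv : G -> G)
  (H : G -> Prop) : Prop :=
  H one /\ (forall a b, H a -> H b -> H (mul a b)) /\ (forall a, H a -> H (inv a)).

Definition finitely_generated (G : Type) (mul : G -> G -> G) (one : G) (inv : G -> G)
  (H : G -> Prop) : Prop :=
  exists l : list G, (forall s, In s l -> H s) /\
    forall P : G -> Prop, is_subgroup G mul one inv P -> (forall s, In s l -> P s) ->
      forall s, H s -> P s.

(** G = < H, t | t s t^-1 = f(s), s in H > is an ascending HNN extension:
    H is a subgroup of G, f : H -> H an injective homomorphism, t s t^-1 = f s
    in G, and (G, H ⊆ G, t) has the universal property of the presentation. *)
Definition ascending_HNN (G : Type) (mul : G -> G -> G) (one : G) (inv : G -> G)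
  (H : G -> Prop) (f : G -> G) (t : G) : Prop :=
  is_subgroup G mul one inv H /\
  (forall s, H s -> H (f s)) /\
  (forall s s', H s -> H s' -> f (mul s s') = mul (f s) (f s')) /\
  (forall s s', H s -> H s' -> f s = f s' -> s = s') /\
  (forall s, H s -> mul (mul t s) (inv t) = f s) /\
  forall (K : Type) (mulK : K -> K -> K) (oneK : K) (invK : K -> K),
    is_group K mulK oneK invK ->
    forall (phi : G -> K) (k : K),
      (forall s s', H s -> H s' -> phi (mul s s') = mulK (phi s) (phi s')) ->
      (forall s, H s -> mulK (mulK k (phi s)) (invK k) = phi (f s)) ->
      (exists Phi : G -> K, (forall a b, Phi (mul a b) = mulK (Phi a) (Phi b)) /\
          (forall s, H s -> Phi s = phi s) /\ Phi t = k) /\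
      (forall Phi1 Phi2 : G -> K,
          (forall a b, Phi1 (mul a b) = mulK (Phi1 a) (Phi1 b)) ->
          (forall a b, Phi2 (mul a b) = mulK (Phi2 a) (Phi2 b)) ->
          (forall s, H s -> Phi1 s = phi s) -> Phi1 t = k ->
          (forall s, H s -> Phi2 s = phi s) -> Phi2 t = k ->
          forall g, Phi1 g = Phi2 g).

Definition isometry (X : metric_space) (phi : X -> X) : Prop :=
  (forall x x', mdist (phi x) (phi x') = mdist x x') /\ (forall y, exists x, phi x = y).

Definition prod_act {G : Type} {X Y : Type} (gX : G -> X -> X) (gY : G -> Y -> Y)
  (g : G) (z : X * Y) : X * Y := (gX g (fst z), gY g (snd z)).

Definition product_isometric_action (X Y : metric_space) (hX : X -> R) (hY : Y -> R)
  (G : Type) (mul : G -> G -> G) (one : G)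
  (gX : G -> X -> X) (gY : G -> Y -> Y) : Prop :=
  (forall g, isometry X (gX g)) /\ (forall g, isometry Y (gY g)) /\
  (forall g z, inZ X Y hX hY z -> inZ X Y hX hY (prod_act gX gY g z)) /\
  (forall z, inZ X Y hX hY z -> prod_act gX gY one z = z) /\
  (forall g g' z, inZ X Y hX hY z ->
     prod_act gX gY (mul g g') z = prod_act gX gY g (prod_act gX gY g' z)).

(** geometric = properly discontinuous and cocompact, w.r.t. the length metric *)
Definition geometric_action (X Y : metric_space) (hX : X -> R) (hY : Y -> R)
  (N : R -> R -> R) (G : Type) (gX : G -> X -> X) (gY : G -> Y -> Y) : Prop :=
  (forall K, Zcompact X Y hX hY N K ->
     exists l : list G, forall g,
       (exists z, K z /\ K (prod_act gX gY g z)) -> In g l) /\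
  (exists K, Zcompact X Y hX hY N K /\
     forall z, inZ X Y hX hY z -> exists g k, K k /\ prod_act gX gY g k = z).

(** height change of g, h(g) = h_X(g_X x) - h_X(x) (independent of x) *)
Definition height_change {G : Type} {X : Type} (hX : X -> R) (gX : G -> X -> X)
  (g : G) (x : X) : R := hX (gX g x) - hX x.

(* Main.v *)
Require Import Defs.
From Stdlib Require Import Reals List Lra Lia ClassicalEpsilon Classical FunctionalExtensionality Bool.
Open Scope R_scope.


Lemma eps_le (a b : R) : (forall eps, 0 < eps -> a <= b + eps) -> a <= b.
Proof.
  intros H. destruct (Rle_dec a b) as [h|h]; [exact h|].
  specialize (H ((a - b)/2) ltac:(lra)). lra.
Qed.

Lemma eps_eq (a b : R) : (forall eps, 0 < eps -> Rabs (a - b) < eps) -> a = b.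
Proof.
  intros H. apply Rle_antisym; apply eps_le; intros eps he; specialize (H eps he);
  apply Rabs_def2 in H; lra.
Qed.

Lemma cosh_lt (a b : R) : 0 <= a -> a < b -> cosh a < cosh b.
Proof.
  intros ha hab. unfold cosh. rewrite !exp_Ropp.
  assert (1 <= exp a) by (rewrite <- exp_0; destruct ha as [ha|ha]; [left; apply exp_increasing; lra| subst; lra]).
  assert (exp a < exp b) by (apply exp_increasing; lra).
  assert (1 < exp a * exp b) by nra.
  assert (/exp a - / exp b = (exp b - exp a) / (exp a * exp b)) by (field; lra).
  assert ((exp b - exp a) / (exp a * exp b) < exp b - exp a).
  { apply Rmult_lt_reg_r with (exp a * exp b). lra.
    unfold Rdiv. rewrite Rmult_assoc, Rinv_l by lra. nra. }
  lra.
Qed.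

Lemma hyp_id (A al T : R) :
  cosh (A + al) * sinh T - sinh (T - al) * cosh A = sinh al * cosh (T + A).
Proof.
  unfold cosh, sinh. unfold Rminus. rewrite !Ropp_plus_distr, !exp_plus, !exp_Ropp, ?Ropp_involutive.
  assert (exp A > 0) by apply exp_pos. assert (exp al > 0) by apply exp_pos.
  assert (exp T > 0) by apply exp_pos.
  field. lra.
Qed.

Lemma cosh_pos x : 0 < cosh x.
Proof. unfold cosh. pose proof (exp_pos x). pose proof (exp_pos (-x)). lra. Qed.

Lemma sinh_pos x : 0 < x -> 0 < sinh x.
Proof. intros. unfold sinh. assert (exp (-x) < exp x) by (apply exp_increasing; lra). lra. Qed.

Lemma mdist_nonneg (M : metric_space) (x y : M) : 0 <= mdist x y.
Proof.
  pose proof (mdist_tri M x y x). rewrite mdist_refl, (mdist_sym M y x) in H. lra.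
Qed.


Section Geo.
Variables (M : metric_space) (h : M -> R) (g : R -> M).
Hypothesis gray : geodesic_ray M g.
Hypothesis hlim : forall x eps, 0 < eps -> exists T, forall t, T <= t ->
      Rabs (t - mdist x (g t) - h x) < eps.

Lemma h_const (x : M) (c T0 : R) : (forall t, T0 <= t -> t - mdist x (g t) = c) -> h x = c.
Proof.
  intros Hc. apply eps_eq. intros eps he. destruct (hlim x eps he) as [T HT].
  specialize (HT (Rmax T T0) (Rmax_l _ _)). rewrite Hc in HT by apply Rmax_r.
  rewrite Rabs_minus_sym. exact HT.
Qed.

Lemma h_lip (x y : M) : Rabs (h x - h y) <= mdist x y.
Proof.
  apply eps_le. intros eps he.
  destruct (hlim x (eps/2) ltac:(lra)) as [T1 H1].
  destruct (hlim y (eps/2) ltac:(lra)) as [T2 H2].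
  specialize (H1 (Rmax T1 T2) (Rmax_l _ _)). specialize (H2 (Rmax T1 T2) (Rmax_r _ _)).
  set (t := Rmax T1 T2) in *.
  pose proof (mdist_tri M x y (g t)). pose proof (mdist_tri M y x (g t)).
  pose proof (mdist_sym M x y).
  apply Rabs_def2 in H1. apply Rabs_def2 in H2. apply Rabs_le. lra.
Qed.

Lemma h_ray (u : R) : 0 <= u -> h (g u) = u.
Proof.
  intros hu. apply (h_const _ _ u). intros t ht. rewrite gray by lra.
  rewrite Rabs_left1 by lra. lra.
Qed.

Variable kappa : R.
Hypothesis kpos : 0 < kappa.
Hypothesis gc : geodesically_complete M.
Hypothesis cat : CAT_neg M kappa.

Lemma line_exists : exists L : R -> M, (forall u, h (L u) = u) /\
   (forall u v, mdist (L u) (L v) <= Rabs (u - v)).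
Proof.
  destruct (gc (fun v => g (1 - v)) 1 ltac:(lra)) as [l [Hl Hlg]].
  { intros s t hs ht. simpl. rewrite gray by lra.
    replace (1 - s - (1 - t)) with (t - s) by ring. apply Rabs_minus_sym. }
  assert (l1 : l 1 = g 0) by (rewrite Hlg by lra; f_equal; ring).
  assert (l0 : l 0 = g 1) by (rewrite Hlg by lra; f_equal; ring).
  assert (Dst : forall s t, 0 <= s -> 1 <= t -> mdist (g t) (l (1 + s)) = t + s).
  { intros s t hs ht. apply Rle_antisym.
    - pose proof (mdist_tri M (g t) (g 0) (l (1+s))).
      rewrite gray in H by lra. rewrite <- l1, Hl in H.
      rewrite Rabs_right in H by lra. rewrite Rabs_left1 in H by lra. lra.
    - destruct cat as [_ Hc].
      set (k := sqrt kappa). assert (kp : 0 < k) by (apply sqrt_lt_R0; lra).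
      assert (Hgs : geodesic_segment M g (mdist (g 0) (g t))).
      { rewrite gray by lra. intros a b ha hb. apply gray; lra. }
      assert (ht0 : 0 < mdist (g 0) (g t)) by (rewrite gray by lra; rewrite Rabs_left1; lra).
      assert (Ea : mdist (g 0) (g t) = t) by (rewrite gray by lra; rewrite Rabs_left1; lra).
      pose proof (Hc (g 0) (g t) (l (1 + s)) g ht0 Hgs eq_refl ltac:(rewrite Ea; reflexivity) 1) as H.
      simpl in H. fold k in H.
      rewrite Ea in H. specialize (H ltac:(lra)). 
      rewrite (mdist_sym M (l (1+s)) (g 1)), <- l0, Hl in H.
      rewrite <- l1, Hl in H.
      replace (Rabs (0 - (1 + s))) with (1 + s) in H by (rewrite Rabs_minus_sym, Rabs_right; lra).
      replace (Rabs (1 - (1 + s))) with s in H by (rewrite Rabs_minus_sym, Rabs_right; lra).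
      set (Dd := mdist (g t) (l (1 + s))) in *.
      assert (E2 : cosh (k * (1 + s)) * sinh (k * t) - sinh (k * (t - 1)) * cosh (k * s)
                = sinh k * cosh (k * (t + s))).
      { pose proof (hyp_id (k*s) k (k*t)).
        replace (k * (1+s)) with (k*s + k) by ring.
        replace (k * (t-1)) with (k*t - k) by ring.
        replace (k * (t+s)) with (k*t + k*s) by ring. exact H0. }
      replace (k * 1) with k in H by ring.
      assert (cosh (k * (t + s)) <= cosh (k * Dd)).
      { pose proof (sinh_pos k kp).
        apply Rmult_le_reg_l with (sinh k); [lra|]. lra. }
      destruct (Rle_dec (t + s) Dd) as [hh|hh]; [exact hh|].
      exfalso. assert (0 <= k * Dd).
      { apply Rmult_le_pos; [lra|]. apply mdist_nonneg. }
      pose proof (cosh_lt (k * Dd) (k * (t + s)) H1 ltac:(nra)). lra. }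
  exists (fun u => if Rle_dec 0 u then g u else l (1 - u)). split.
  - intros u. destruct (Rle_dec 0 u).
    + apply h_ray; lra.
    + apply (h_const _ _ 1). intros t ht.
      replace (1 - u) with (1 + (- u)) by ring.
      rewrite mdist_sym, Dst by lra. ring.
  - intros u v. destruct (Rle_dec 0 u), (Rle_dec 0 v).
    + rewrite gray by lra. lra.
    + pose proof (mdist_tri M (g u) (g 0) (l (1 - v))).
      assert (E1 : mdist (g u) (g 0) = u) by (rewrite gray by lra; rewrite Rabs_right; lra).
      assert (E2 : mdist (g 0) (l (1 - v)) = - v) by (rewrite <- l1, Hl;
        rewrite Rabs_minus_sym, Rabs_right; lra).
      rewrite Rabs_right by lra. lra.
    + pose proof (mdist_tri M (l (1 - u)) (g 0) (g v)).
      assert (E1 : mdist (g 0) (g v) = v) by (rewrite gray by lra; rewrite Rabs_left1; lra).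
      assert (E2 : mdist (l (1 - u)) (g 0) = - u) by (rewrite <- l1, Hl;
        rewrite Rabs_right; lra).
      rewrite Rabs_left1 by lra. lra.
    + rewrite Hl. replace (1 - u - (1 - v)) with (- (u - v)) by ring.
      rewrite Rabs_Ropp. lra.
Qed.
End Geo.

Lemma height_line (M : metric_space) (h : M -> R) (kappa : R) :
  0 < kappa -> geodesically_complete M -> CAT_neg M kappa -> height_function M h ->
  (forall x y, Rabs (h x - h y) <= mdist x y) /\
  (forall s, 0 <= s -> exists x, h x = s) /\
  exists L : R -> M, (forall u, h (L u) = u) /\
   (forall u v, mdist (L u) (L v) <= Rabs (u - v)).
Proof.
  intros kp gc cat [g [gr [_ hl]]]. split; [|split].
  - apply (h_lip M h g hl).
  - intros s hs. exists (g s). apply (h_ray M h g gr hl s hs).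
  - apply (line_exists M h g gr hl kappa kp gc cat).
Qed.


Section Grp.
Variables (G : Type) (mul : G -> G -> G) (one : G) (inv : G -> G).
Hypothesis grp : is_group G mul one inv.
Local Notation "a ** b" := (mul a b) (at level 40, left associativity).

Lemma gA a b c : a ** (b ** c) = a ** b ** c. Proof. apply grp. Qed.
Lemma g1l a : one ** a = a. Proof. apply grp. Qed.
Lemma g1r a : a ** one = a. Proof. apply grp. Qed.
Lemma gVl a : inv a ** a = one. Proof. apply grp. Qed.
Lemma gVr a : a ** inv a = one. Proof. apply grp. Qed.

Lemma g_cancel_l a b c : a ** b = a ** c -> b = c.
Proof.
  intros E. rewrite <- (g1l b), <- (g1l c), <- (gVl a), <- !gA, E. reflexivity.
Qed.

Lemma inv_uniq a b : a ** b = one -> b = inv a.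
Proof. intros E. apply (g_cancel_l a). rewrite E, gVr. reflexivity. Qed.

Lemma inv_inv a : inv (inv a) = a.
Proof. symmetry. apply inv_uniq. apply gVl. Qed.

Lemma inv_mul a b : inv (a ** b) = inv b ** inv a.
Proof. symmetry. apply inv_uniq. rewrite <- gA, (gA b), gVr, g1l, gVr. reflexivity. Qed.

Lemma inv_one : inv one = one.
Proof. symmetry. apply inv_uniq. apply g1l. Qed.

Lemma gVK a b : inv a ** (a ** b) = b. Proof. rewrite gA, gVl, g1l. reflexivity. Qed.
Lemma gKV a b : a ** (inv a ** b) = b. Proof. rewrite gA, gVr, g1l. reflexivity. Qed.

Fixpoint pw (x : G) (n : nat) : G := match n with O => one | S k => x ** pw x k end.

Lemma pw_add x m n : pw x (m + n) = pw x m ** pw x n.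
Proof. induction m; simpl. rewrite g1l; auto. rewrite IHm, gA. auto. Qed.

Lemma pw_S_r x n : pw x (S n) = pw x n ** x.
Proof. replace (S n) with (n + 1)%nat by lia. rewrite pw_add. simpl. rewrite g1r. auto. Qed.

Lemma inv_pw x n : inv (pw x n) = pw (inv x) n.
Proof. induction n; simpl. apply inv_one. rewrite inv_mul, IHn, <- pw_S_r. reflexivity. Qed.

Lemma subgroup_inv_iff (S : G -> Prop) : is_subgroup G mul one inv S ->
  forall a, S (inv a) -> S a.
Proof. intros [_ [_ Si]] a h. rewrite <- (inv_inv a). auto. Qed.

Definition Kt := (G * (G -> bool))%type.
Definition mulK (p q : Kt) : Kt := (fst p ** fst q, fun x => xorb (snd p x) (snd q (inv (fst p) ** x))).
Definition oneK : Kt := (one, fun _ => false).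
Definition invK (p : Kt) : Kt := (inv (fst p), fun x => snd p (fst p ** x)).

Lemma Kext (p q : Kt) : fst p = fst q -> (forall x, snd p x = snd q x) -> p = q.
Proof.
  destruct p, q; simpl; intros -> E. f_equal. apply functional_extensionality; auto.
Qed.

Lemma K_group : is_group Kt mulK oneK invK.
Proof.
  repeat split.
  - intros [a u] [b v] [c w]. apply Kext; simpl. apply gA. intros x.
    rewrite xorb_assoc, inv_mul, gA. reflexivity.
  - intros [a u]. apply Kext; simpl. apply g1l. intros x. rewrite inv_one, g1l. reflexivity.
  - intros [a u]. apply Kext; simpl. apply g1r. intros x. apply xorb_false_r.
  - intros [a u]. apply Kext; simpl. apply gVl. intros x. rewrite inv_inv. apply xorb_nilpotent.
  - intros [a u]. apply Kext; simpl. apply gVr. intros x. rewrite gKV. apply xorb_nilpotent.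
Qed.

Definition dec (P : Prop) : bool := if excluded_middle_informative P then true else false.

Variables (H : G -> Prop) (f : G -> G) (t : G).
Hypothesis hnn : ascending_HNN G mul one inv H f t.

Lemma gen_all (S : G -> Prop) : is_subgroup G mul one inv S ->
  (forall s, H s -> S s) -> S t -> forall g, S g.
Proof.
  intros Ssub SH St g.
  destruct hnn as [_ [_ [_ [_ [Hconj Univ]]]]].
  set (Phi1 := fun a : G => ((a, fun _ => false) : Kt)).
  set (Phi2 := fun a : G => ((a, fun x => xorb (dec (S x)) (dec (S (inv a ** x)))) : Kt)).
  assert (hom1 : forall a b, Phi1 (a ** b) = mulK (Phi1 a) (Phi1 b)).
  { intros a b. apply Kext; simpl; auto. }
  assert (hom2 : forall a b, Phi2 (a ** b) = mulK (Phi2 a) (Phi2 b)).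
  { intros a b. apply Kext; simpl; auto. intros x.
    rewrite inv_mul, <- gA.
    destruct (dec (S x)), (dec (S (inv a ** x))), (dec (S (inv b ** (inv a ** x)))); reflexivity. }
  assert (agree : forall s, S s -> Phi2 s = Phi1 s).
  { intros s hs. apply Kext; simpl; auto. intros x.
    assert (S x <-> S (inv s ** x)).
    { destruct Ssub as [S1 [SM SI]]. split; intros.
      - apply SM; auto.
      - rewrite <- (gKV s x). apply SM; auto. }
    unfold dec. destruct (excluded_middle_informative (S x)), (excluded_middle_informative (S (inv s ** x))); tauto. }
  destruct (Univ Kt mulK oneK invK K_group Phi1 (Phi1 t)) as [_ Uniq].
  { intros; apply hom1. }
  { intros s hs. rewrite <- Hconj by auto. rewrite !hom1. f_equal. }
  pose proof (Uniq Phi2 Phi1 hom2 hom1 (fun s hs => agree s (SH s hs)) (agree t St)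
     (fun _ _ => eq_refl) eq_refl g) as E.
  apply (f_equal (fun p => snd p one)) in E. simpl in E.
  rewrite g1r in E. unfold dec in E.
  destruct (excluded_middle_informative (S one)) as [h1|h1];
  destruct (excluded_middle_informative (S (inv g))) as [h2|h2]; simpl in E; try discriminate.
  - apply (subgroup_inv_iff S Ssub); auto.
  - exfalso. apply h1. apply Ssub.
Qed.
End Grp.


Section NF.
Variables (G : Type) (mul : G -> G -> G) (one : G) (inv : G -> G).
Hypothesis grp : is_group G mul one inv.
Local Notation "a ** b" := (mul a b) (at level 40, left associativity).
Variables (H : G -> Prop) (f : G -> G) (t : G).
Hypothesis hnn : ascending_HNN G mul one inv H f t.
Local Notation pw := (pw G mul one).
Local Notation ti := (inv t).

Lemma Hsub : is_subgroup G mul one inv H. Proof. apply hnn. Qed.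
Lemma Hf s : H s -> H (f s). Proof. apply hnn. Qed.
Lemma Hconj s : H s -> t ** s ** ti = f s. Proof. apply hnn. Qed.

Ltac gl := repeat rewrite (gA G mul one inv grp).

Lemma ts s : H s -> t ** s = f s ** t.
Proof.
  intros hs. rewrite <- Hconj by auto. gl. rewrite <- (gA G mul one inv grp _ ti t), (gVl G mul one inv grp), (g1r G mul one inv grp). auto.
Qed.

Lemma sti s : H s -> s ** ti = ti ** f s.
Proof.
  intros hs. rewrite <- Hconj by auto. gl. rewrite (gVl G mul one inv grp), (g1l G mul one inv grp). auto.
Qed.

Fixpoint fp (k : nat) (s : G) : G := match k with O => s | S j => f (fp j s) end.

Lemma Hfp k s : H s -> H (fp k s).
Proof. induction k; simpl; auto. intros; apply Hf; auto. Qed.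

Lemma tks k s : H s -> pw t k ** s = fp k s ** pw t k.
Proof.
  intros hs. induction k; simpl.
  - rewrite (g1l G mul one inv grp), (g1r G mul one inv grp). auto.
  - rewrite <- (gA G mul one inv grp), IHk, (gA G mul one inv grp), ts by (apply Hfp; auto).
    rewrite (gA G mul one inv grp). auto.
Qed.

Lemma stik k s : H s -> s ** pw ti k = pw ti k ** fp k s.
Proof.
  intros hs. induction k; simpl.
  - rewrite (g1l G mul one inv grp), (g1r G mul one inv grp). auto.
  - replace (ti ** pw ti k) with (pw ti k ** ti) by (symmetry; apply (pw_S_r G mul one inv grp)).
    rewrite (gA G mul one inv grp), IHk.
    rewrite <- (gA G mul one inv grp), sti by (apply Hfp; auto).
    rewrite (gA G mul one inv grp). auto.
Qed.

Lemma t_ti n m : pw t n ** pw ti m = pw t (n - m) ** pw ti (m - n).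
Proof.
  revert m; induction n; intros m; simpl.
  - replace (m - 0)%nat with m by lia. auto.
  - destruct m; simpl.
    + reflexivity.
    + rewrite <- IHn.
      replace (t ** pw t n) with (pw t n ** t) by (symmetry; apply (pw_S_r G mul one inv grp)).
      rewrite <- (gA G mul one inv grp), (gKV G mul one inv grp). auto.
Qed.

Definition NF (g : G) : Prop := exists m n s, H s /\ g = pw ti m ** s ** pw t n.

Lemma NF_all : forall g, NF g.
Proof.
  destruct Hsub as [H1 [HM HI]].
  apply (gen_all G mul one inv grp H f t hnn NF).
  - split; [|split].
    + exists 0%nat, 0%nat, one. split; auto. simpl. rewrite !(g1r G mul one inv grp). auto.
    + intros a b [m [n [s [hs ->]]]] [m' [n' [s' [hs' ->]]]].
      assert (E : pw ti m ** s ** pw t n ** (pw ti m' ** s' ** pw t n') =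
                  pw ti m ** s ** (pw t n ** pw ti m') ** s' ** pw t n') by (gl; auto).
      rewrite E, t_ti. clear E.
      destruct (Nat.le_gt_cases m' n).
      * replace (m' - n)%nat with 0%nat by lia. simpl. rewrite (g1r G mul one inv grp).
        exists m, (n - m' + n')%nat, (s ** fp (n - m') s'). split.
        { apply HM; auto. apply Hfp; auto. }
        rewrite (pw_add G mul one inv grp).
        rewrite <- (gA G mul one inv grp (pw ti m ** s)), tks by auto. gl. auto.
      * replace (n - m')%nat with 0%nat by lia. simpl. rewrite (g1l G mul one inv grp).
        exists (m + (m' - n))%nat, n', (fp (m' - n) s ** s'). split.
        { apply HM; auto. apply Hfp; auto. }
        rewrite (pw_add G mul one inv grp).
        rewrite <- (gA G mul one inv grp (pw ti m)), stik by auto. gl. auto.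
    + intros a [m [n [s [hs ->]]]]. exists n, m, (inv s). split; auto.
      rewrite !(inv_mul G mul one inv grp), !(inv_pw G mul one inv grp), (inv_inv G mul one inv grp).
      gl. auto.
  - intros s hs. exists 0%nat, 0%nat, s. split; auto. simpl.
    rewrite (g1l G mul one inv grp), (g1r G mul one inv grp). auto.
  - exists 0%nat, 1%nat, one. split; auto. simpl.
    rewrite (g1l G mul one inv grp), (g1l G mul one inv grp), (g1r G mul one inv grp). auto.
Qed.
End NF.


Section Act.
Variables (X Y : metric_space) (hX : X -> R) (hY : Y -> R)
  (G : Type) (mul : G -> G -> G) (one : G) (inv : G -> G)
  (gX : G -> X -> X) (gY : G -> Y -> Y).
Hypothesis grp : is_group G mul one inv.
Hypothesis pia : product_isometric_action X Y hX hY G mul one gX gY.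
Hypothesis hXlip : forall x y, Rabs (hX x - hX y) <= mdist x y.
Hypothesis hYsurj : forall u, exists y, hY y = u.
Variable LX : R -> X.
Hypothesis LXh : forall u, hX (LX u) = u.
Hypothesis LXd : forall u v, mdist (LX u) (LX v) <= Rabs (u - v).
Local Notation "a ** b" := (mul a b) (at level 40, left associativity).

Lemma partner x : exists y, inZ X Y hX hY (x, y).
Proof. destruct (hYsurj (- hX x)) as [y hy]. exists y. unfold inZ; simpl. lra. Qed.

Lemma act_comp g g' x : gX (g ** g') x = gX g (gX g' x).
Proof.
  destruct (partner x) as [y hy]. destruct pia as [_ [_ [_ [_ Hc]]]].
  pose proof (Hc g g' (x, y) hy) as E. unfold prod_act in E; simpl in E.
  injection E; auto.
Qed.

Lemma act_one x : gX one x = x.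
Proof.
  destruct (partner x) as [y hy]. destruct pia as [_ [_ [_ [Ho _]]]].
  pose proof (Ho (x, y) hy) as E. unfold prod_act in E; simpl in E. injection E; auto.
Qed.

Lemma act_dist g x x' : mdist (gX g x) (gX g x') = mdist x x'.
Proof. destruct pia as [Hi _]. apply (Hi g). Qed.

Lemma same_height g x x' : hX x = hX x' -> hX (gX g x) = hX (gX g x').
Proof.
  intros E. destruct (partner x) as [y hy].
  assert (hy' : inZ X Y hX hY (x', y)) by (unfold inZ in *; simpl in *; lra).
  destruct pia as [_ [_ [Hz _]]].
  pose proof (Hz g _ hy) as A. pose proof (Hz g _ hy') as B.
  unfold inZ, prod_act in A, B; simpl in A, B. lra.
Qed.

Definition T (g : G) (c : R) : Prop := forall x, hX (gX g x) = hX x + c.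

Lemma T_mul g g' a b : T g a -> T g' b -> T (g ** g') (a + b).
Proof. intros A B x. rewrite act_comp, A, B. ring. Qed.

Lemma T_inv g a : T g a -> T (inv g) (- a).
Proof.
  intros A x. pose proof (A (gX (inv g) x)). rewrite <- act_comp, (gVr G mul one inv grp), act_one in H.
  lra.
Qed.

Lemma T_one : T one 0.
Proof. intros x. rewrite act_one. ring. Qed.

Lemma T_pw g a n : T g a -> T (pw G mul one g n) (INR n * a).
Proof.
  intros A. induction n; cbn [pw].
  - intros x; rewrite act_one; simpl; ring.
  - replace (INR (S n) * a) with (a + INR n * a) by (rewrite S_INR; ring).
    apply T_mul; auto.
Qed.

Lemma T_uniq g a b (x : X) : T g a -> T g b -> a = b.
Proof. intros A B. pose proof (A x). pose proof (B x). lra. Qed.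

Lemma T_trans g : (forall x, hX x < hX (gX g x)) -> exists c, 0 < c /\ T g c.
Proof.
  intros Hup.
  set (phi := fun u => hX (gX g (LX u))).
  set (phi' := fun u => hX (gX (inv g) (LX u))).
  assert (Hphi : forall x, hX (gX g x) = phi (hX x)).
  { intros x. unfold phi. apply same_height. rewrite LXh. auto. }
  assert (Hphi' : forall x, hX (gX (inv g) x) = phi' (hX x)).
  { intros x. unfold phi'. apply same_height. rewrite LXh. auto. }
  assert (L1 : forall u v, Rabs (phi u - phi v) <= Rabs (u - v)).
  { intros u v. unfold phi. eapply Rle_trans. apply hXlip. rewrite act_dist. auto. }
  assert (L1' : forall u v, Rabs (phi' u - phi' v) <= Rabs (u - v)).
  { intros u v. unfold phi'. eapply Rle_trans. apply hXlip. rewrite act_dist. auto. }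
  assert (Inv : forall u, phi' (phi u) = u).
  { intros u. unfold phi at 1. rewrite <- Hphi', <- act_comp, (gVl G mul one inv grp), act_one.
    apply LXh. }
  assert (Iso : forall u v, Rabs (phi u - phi v) = Rabs (u - v)).
  { intros u v. apply Rle_antisym; auto. rewrite <- (Inv u), <- (Inv v) at 1. apply L1'. }
  assert (Up : forall u, u < phi u).
  { intros u. pose proof (Hup (LX u)). rewrite Hphi, LXh in H. auto. }
  set (c := phi 0). assert (cpos : 0 < c) by apply Up.
  assert (Big : forall V, c <= V -> phi V = c + V).
  { intros V hV. pose proof (Iso V 0). replace (V - 0) with V in H by ring.
    rewrite (Rabs_right V) in H by lra. fold c in H. pose proof (Up V).
    destruct (Rle_dec 0 (phi V - c)).
    - rewrite Rabs_right in H by lra. lra.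
    - rewrite Rabs_left in H by lra. lra. }
  exists c. split; auto. intros x. rewrite Hphi.
  set (u := hX x).
  set (V := Rabs u + c + 1).
  assert (uV : Rabs u < V) by (unfold V; lra).
  pose proof (Big V ltac:(unfold V; pose proof (Rabs_pos u); lra)) as BV.
  pose proof (Iso V u) as I1. pose proof (Iso u 0) as I2. fold c in I2.
  replace (u - 0) with u in I2 by ring.
  apply Rabs_def2 in uV as [uV1 uV2].
  rewrite (Rabs_right (V - u)) in I1 by lra. rewrite BV in I1.
  destruct (Rle_dec 0 (phi u - c)), (Rle_dec 0 u).
  - rewrite Rabs_right in I2 by lra. rewrite Rabs_right in I2 by lra. lra.
  - rewrite Rabs_right in I2 by lra. rewrite Rabs_left in I2 by lra.
    rewrite Rabs_right in I1 by lra. lra.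
  - rewrite Rabs_left in I2 by lra. rewrite Rabs_right in I2 by lra.
    rewrite Rabs_right in I1 by lra. lra.
  - rewrite Rabs_left in I2 by lra. rewrite Rabs_left in I2 by lra. lra.
Qed.
End Act.


Section Reach.
Variables (X : metric_space) (hX : X -> R) (C0 : R).

Inductive Reach (b : X) : X -> Prop :=
| r0 : hX b <= 0 -> Reach b b
| rS x y : Reach b y -> mdist x y < C0 -> hX x <= 0 -> Reach b x.

Lemma Reach_h b x : Reach b x -> hX x <= 0 /\ hX b <= 0.
Proof. induction 1; intuition. Qed.

Lemma Reach_trans c y x : Reach c y -> Reach y x -> Reach c x.
Proof. intros A B. induction B; auto. eapply rS; eauto. Qed.

Lemma Reach_sym b x : Reach b x -> Reach x b.
Proof.
  induction 1. constructor; auto.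
  apply (Reach_trans x y b); auto.
  eapply rS. constructor; auto. rewrite mdist_sym; auto.
  apply (Reach_h _ _ H). 
Qed.

Lemma Reach_transport (u : X -> X) b x :
  (forall p q, mdist (u p) (u q) = mdist p q) -> (forall p, hX (u p) = hX p) ->
  Reach b x -> Reach (u b) (u x).
Proof.
  intros Hd Hh. induction 1. constructor. rewrite Hh; auto.
  eapply rS; eauto. rewrite Hd; auto. rewrite Hh; auto.
Qed.

Lemma Reach_seq b x : Reach b x -> exists (n : nat) (p : nat -> X),
  p O = x /\ p n = b /\ (forall i, (i < n)%nat -> mdist (p i) (p (S i)) < C0) /\
  (forall i, (i <= n)%nat -> hX (p i) <= 0).
Proof.
  induction 1.
  - exists O, (fun _ => b). repeat split; auto; intros; lia.
  - destruct IHReach as [n [p [p0 [pn [pd ph]]]]].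
    exists (S n), (fun i => match i with O => x | S j => p j end). repeat split; auto.
    + intros i hi. destruct i. rewrite p0; auto. apply pd; lia.
    + intros i hi. destruct i; auto. apply ph; lia.
Qed.
End Reach.


Lemma phi_ge (phi : nat -> nat) : (forall n, (phi n < phi (S n))%nat) -> forall n, (n <= phi n)%nat.
Proof. intros H n. induction n. lia. specialize (H n). lia. Qed.

Lemma Zball_dX (X Y : metric_space) (hX : X -> R) (hY : Y -> R) (N : R -> R -> R) z w r :
  admissible_monotone_norm N -> Zball X Y hX hY N z w r -> mdist (fst z) (fst w) < 2 * r.
Proof.
  intros [_ [_ [_ [_ [_ [Nlow _]]]]]] [c [L [_ [c0 [c1 [hL hlen]]]]]].
  pose proof (hlen 1%nat (fun i => match i with O => 0 | _ => 1 end) eq_refl eq_refl) as E.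
  simpl in E. specialize (E ltac:(intros i hi; destruct i; lra)).
  rewrite c0, c1 in E. unfold dN in E. pose proof (Nlow (mdist (fst z) (fst w)) (mdist (snd z) (snd w))).
  pose proof (mdist_nonneg X (fst z) (fst w)). pose proof (mdist_nonneg Y (snd z) (snd w)).
  rewrite !Rabs_right in H by lra. lra.
Qed.

Lemma Zcompact_bounded (X Y : metric_space) (hX : X -> R) (hY : Y -> R) (N : R -> R -> R)
  (K : X * Y -> Prop) (x0 : X) :
  admissible_monotone_norm N -> Zcompact X Y hX hY N K ->
  exists R0, forall k, K k -> mdist (fst k) x0 <= R0.
Proof.
  intros Nadm [_ Kc].
  apply NNPP. intros Hn.
  assert (Hu : forall n : nat, exists k, K k /\ INR n < mdist (fst k) x0).
  { intros n. apply NNPP. intros Hk. apply Hn. exists (INR n). intros k hk.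
    apply Rnot_lt_le. intros hl. apply Hk. exists k. auto. }
  set (u := fun n => proj1_sig (constructive_indefinite_description _ (Hu n))).
  assert (uP : forall n, K (u n) /\ INR n < mdist (fst (u n)) x0).
  { intros n. unfold u. destruct (constructive_indefinite_description _ (Hu n)). auto. }
  destruct (Kc u (fun n => proj1 (uP n))) as [phi [l [Kl [phiinc conv]]]].
  destruct (conv 1 ltac:(lra)) as [M HM].
  destruct (INR_unbounded (mdist (fst l) x0 + 2)) as [n0 hn0].
  set (n := Nat.max M n0).
  pose proof (HM n (Nat.le_max_l _ _)) as B.
  apply Zball_dX in B; auto.
  pose proof (proj2 (uP (phi n))).
  pose proof (phi_ge phi phiinc n).
  assert (INR n0 <= INR (phi n)) by (apply le_INR; unfold n in *; lia).
  pose proof (mdist_tri X (fst (u (phi n))) (fst l) x0) as T3.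
  rewrite (mdist_sym X (fst (u (phi n))) (fst l)) in T3.
  lra.
Qed.


Lemma T_eq (X : metric_space) (hX : X -> R) (G : Type) (gX : G -> X -> X) g c c' :
  T X hX G gX g c -> c = c' -> T X hX G gX g c'.
Proof. intros; subst; auto. Qed.

Lemma listmax_bound (A : Type) (F : A -> R) (l : list A) :
  forall s, In s l -> F s <= fold_right (fun s acc => Rmax (F s) acc) 0 l.
Proof.
  induction l; simpl; intros s hs; [contradiction|]. destruct hs as [<-|hs].
  apply Rmax_l. eapply Rle_trans; [apply IHl; auto| apply Rmax_r].
Qed.

Lemma listmax_nonneg (A : Type) (F : A -> R) (l : list A) :
  0 <= fold_right (fun s acc => Rmax (F s) acc) 0 l.
Proof. induction l; simpl. lra. eapply Rle_trans; [apply IHl| apply Rmax_r]. Qed.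

Theorem mainTheorem18
  (kappa : R) (X Y : metric_space) (hX : X -> R) (hY : Y -> R) (N : R -> R -> R)
  (G : Type) (mul : G -> G -> G) (one : G) (inv : G -> G)
  (H : G -> Prop) (f : G -> G) (t : G)
  (gX : G -> X -> X) (gY : G -> Y -> Y) (x0 : X) (D : R) :
  0 < kappa ->
  proper_space X -> geodesically_complete X -> CAT_neg X kappa ->
  proper_space Y -> geodesically_complete Y -> CAT_neg Y kappa ->
  height_function X hX -> height_function Y hY ->
  admissible_monotone_norm N ->
  is_group G mul one inv ->
  product_isometric_action X Y hX hY G mul one gX gY ->
  geometric_action X Y hX hY N G gX gY ->
  ascending_HNN G mul one inv H f t ->
  finitely_generated G mul one inv H ->
  (forall s, H s -> forall x, height_change hX gX s x = 0) ->
  (forall x, 0 < height_change hX gX t x) ->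
  hX x0 = 0 -> 0 < D ->
  exists C, 0 < C /\
    forall x1 : X, Rabs (hX x1) <= D ->
      exists (n : nat) (p : nat -> X),
        p O = x1 /\ p n = x0 /\
        (forall i, (i < n)%nat -> mdist (p i) (p (S i)) < C) /\
        (forall i, (1 <= i <= n)%nat -> hX (p i) <= 0).
Proof.
  intros kp pX gcX catX pY gcY catY hfX hfY Nadm grp pia geo hnn fgH Hh Ht hx0 Dpos.
  destruct (height_line X hX kappa kp gcX catX hfX) as [hXlip [_ [LX [LXh LXd]]]].
  destruct (height_line Y hY kappa kp gcY catY hfY) as [_ [_ [LY [LYh _]]]].
  assert (hYs : forall u, exists y, hY y = u) by (intros u; exists (LY u); auto).
  pose proof (act_comp X Y hX hY G mul one gX gY pia hYs) as comp.
  pose proof (act_one X Y hX hY G mul one gX gY pia hYs) as aone.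
  pose proof (act_dist X Y hX hY G mul one gX gY pia) as adist.
  set (TT := T X hX G gX).
  assert (Tm : forall g g' a b, TT g a -> TT g' b -> TT (mul g g') (a + b)).
  { apply (T_mul X Y hX hY G mul one gX gY pia hYs). }
  assert (Tp : forall g a n, TT g a -> TT (pw G mul one g n) (INR n * a)).
  { apply (T_pw X Y hX hY G mul one gX gY pia hYs). }
  assert (Ts : forall s, H s -> TT s 0).
  { intros s hs x. specialize (Hh s hs x). unfold height_change in Hh. lra. }
  destruct (T_trans X Y hX hY G mul one inv gX gY grp pia hXlip hYs LX LXh LXd t) as [tau [taup Tt]].
  { intros x. specialize (Ht x). unfold height_change in Ht. lra. }
  assert (Tti : TT (inv t) (- tau)) by (apply (T_inv X Y hX hY G mul one inv gX gY grp pia hYs); auto).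
  assert (h0 : forall g c, TT g c -> hX (gX g x0) = c).
  { intros g c Tg. rewrite Tg, hx0. ring. }
  destruct fgH as [l [lH lgen]].
  set (Cl := fold_right (fun s acc => Rmax (mdist (gX s x0) x0) acc) 0 l).
  set (C0 := Rmax (mdist (gX t x0) x0) (mdist (gX (inv t) x0) x0) + Cl + 1).
  assert (Clnn : 0 <= Cl) by apply listmax_nonneg.
  assert (C0t : mdist (gX t x0) x0 < C0).
  { unfold C0. pose proof (Rmax_l (mdist (gX t x0) x0) (mdist (gX (inv t) x0) x0)). lra. }
  assert (C0ti : mdist (gX (inv t) x0) x0 < C0).
  { unfold C0. pose proof (Rmax_r (mdist (gX t x0) x0) (mdist (gX (inv t) x0) x0)). lra. }
  assert (C0l : forall s, In s l -> mdist (gX s x0) x0 < C0).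
  { intros s hs. pose proof (listmax_bound G (fun s => mdist (gX s x0) x0) l s hs) as LB.
    simpl in LB. fold Cl in LB. unfold C0. pose proof (Rmax_l (mdist (gX t x0) x0) (mdist (gX (inv t) x0) x0)).
    pose proof (mdist_nonneg X (gX t x0) x0). lra. }
  set (RR := Reach X hX C0 x0).
  assert (Step : forall g sg, RR (gX g x0) -> mdist (gX sg x0) x0 < C0 ->
             hX (gX (mul g sg) x0) <= 0 -> RR (gX (mul g sg) x0)).
  { intros g sg Rg hd hh. eapply rS; eauto. rewrite comp, adist. auto. }
  assert (Rx0 : RR x0) by (constructor; lra).
  assert (pwt_ti : forall m, mul (pw G mul one t m) (pw G mul one (inv t) m) = one).
  { intros m. rewrite (t_ti G mul one inv grp t m m), Nat.sub_diag. simpl. apply (g1l G mul one inv grp). }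
  assert (Desc : forall j g c, RR (gX g x0) -> TT g c -> c <= 0 ->
            RR (gX (mul g (pw G mul one (inv t) j)) x0)).
  { induction j; intros g c Rg Tg hc.
    - simpl. rewrite (g1r G mul one inv grp). auto.
    - rewrite (pw_S_r G mul one inv grp), (gA G mul one inv grp). apply Step; auto.
      + apply (IHj g c); auto.
      + rewrite (h0 _ (c + (INR j * - tau + - tau))). pose proof (pos_INR j). nra.
        rewrite <- (gA G mul one inv grp). apply Tm; [exact Tg|]. rewrite <- (pw_S_r G mul one inv grp).
        apply T_eq with (INR (S j) * - tau). apply Tp; auto. rewrite S_INR. ring. }
  assert (Asc : forall j g c, RR (gX g x0) -> TT g c -> c + INR j * tau <= 0 ->
            RR (gX (mul g (pw G mul one t j)) x0)).
  { induction j; intros g c Rg Tg hc.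
    - simpl. rewrite (g1r G mul one inv grp). auto.
    - rewrite (pw_S_r G mul one inv grp), (gA G mul one inv grp). apply Step; auto.
      + apply (IHj g c); auto. rewrite S_INR in hc. lra.
      + rewrite (h0 _ (c + INR (S j) * tau)). lra.
        rewrite <- (gA G mul one inv grp). apply Tm; [exact Tg|]. rewrite <- (pw_S_r G mul one inv grp).
        apply Tp; auto. }
  assert (Aall : forall m, RR (gX (pw G mul one (inv t) m) x0)).
  { intros m. pose proof (Desc m one 0 ltac:(rewrite aone; exact Rx0)) as E. rewrite (g1l G mul one inv grp) in E.
    apply E; [|lra]. intros x. rewrite aone. ring. }

  pose proof (proj1 hnn) as [H1 [HM HI]].
  set (P := fun s => H s /\ forall m, RR (gX (mul (pw G mul one (inv t) m) s) x0)).
  assert (gA' := gA G mul one inv grp). assert (g1l' := g1l G mul one inv grp).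
  assert (g1r' := g1r G mul one inv grp). assert (gVl' := gVl G mul one inv grp).
  assert (TconjH : forall a m, H a -> TT (mul (mul (pw G mul one (inv t) m) a) (pw G mul one t m)) 0).
  { intros a m ha. apply T_eq with (INR m * - tau + 0 + INR m * tau); [|ring].
    apply Tm; [apply Tm|]; auto. }
  assert (Ttr : forall u p q, TT u 0 -> Reach X hX C0 p q -> Reach X hX C0 (gX u p) (gX u q)).
  { intros u p q Tu Rpq. apply Reach_transport; auto. intros z. rewrite Tu. ring. }
  assert (PH : forall s, H s -> P s).
  { apply (lgen P). split; [|split].
    - split; auto. intros m. rewrite g1r'. apply Aall.
    - intros a b [ha Pa] [hb Pb]. split; auto. intros m.
      set (u := mul (mul (pw G mul one (inv t) m) a) (pw G mul one t m)).
      assert (Ru : RR (gX u x0)).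
      { apply (Asc m _ (INR m * - tau + 0)); [apply Pa | apply Tm; [apply Tp; auto | apply Ts; auto] | idtac]. lra. }
      pose proof (Ttr u x0 _ (TconjH a m ha) (Pb m)) as E.
      rewrite <- comp in E.
      assert (Eq : mul u (mul (pw G mul one (inv t) m) b) = mul (pw G mul one (inv t) m) (mul a b)).
      { unfold u. rewrite <- !gA'. rewrite (gA' (pw G mul one t m)), pwt_ti, g1l'. auto. }
      rewrite Eq in E. exact (Reach_trans X hX C0 x0 _ _ Ru E).
    - intros a [ha Pa]. split; auto. intros m.
      set (u := mul (mul (pw G mul one (inv t) m) (inv a)) (pw G mul one t m)).
      pose proof (Ttr u x0 _ (TconjH (inv a) m (HI a ha)) (Pa m)) as E.
      rewrite <- comp in E.
      assert (Eq : mul u (mul (pw G mul one (inv t) m) a) = pw G mul one (inv t) m).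
      { unfold u. rewrite <- !gA'. rewrite (gA' (pw G mul one t m)), pwt_ti, g1l', gVl', g1r'. auto. }
      rewrite Eq in E.
      assert (Ru : RR (gX u x0)).
      { apply Reach_sym. eapply Reach_trans; [|apply Reach_sym; apply (Aall m)]. exact E. }
      pose proof (Desc m u 0 Ru (TconjH (inv a) m (HI a ha)) ltac:(lra)) as F.
      assert (Eq2 : mul u (pw G mul one (inv t) m) = mul (pw G mul one (inv t) m) (inv a)).
      { unfold u. rewrite <- !gA'. rewrite pwt_ti, g1r'. auto. }
      rewrite Eq2 in F. exact F.
    - intros sg hsg. split; auto. intros m. apply Step; auto.
      rewrite (h0 _ (INR m * - tau + 0)). pose proof (pos_INR m). nra.
      apply Tm; auto. }

  assert (NFT : forall g, exists m n s, H s /\ g = mul (mul (pw G mul one (inv t) m) s) (pw G mul one t n)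
      /\ TT g (INR m * - tau + 0 + INR n * tau) /\ RR (gX (mul (pw G mul one (inv t) m) s) x0)).
  { intros g. destruct (NF_all G mul one inv grp H f t hnn g) as [m [n [s [hs Eg]]]].
    exists m, n, s. repeat split; auto. rewrite Eg. apply Tm; [apply Tm|]; auto.
    apply (PH s hs). }
  set (delta := mdist (gX (inv t) x0) x0).
  assert (dpw : forall n, mdist (gX (pw G mul one (inv t) n) x0) x0 <= INR n * delta).
  { induction n. simpl. rewrite aone, mdist_refl. lra.
    rewrite (pw_S_r G mul one inv grp), comp, S_INR.
    pose proof (mdist_tri X (gX (pw G mul one (inv t) n) (gX (inv t) x0)) (gX (pw G mul one (inv t) n) x0) x0).
    rewrite adist in H0. fold delta in H0. lra. }
  destruct geo as [_ [K [Kc Kcov]]].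
  destruct (Zcompact_bounded X Y hX hY N K x0 Nadm Kc) as [R0 HR0].
  set (R1 := Rmax 0 R0).
  assert (R1nn : 0 <= R1) by apply Rmax_l.
  assert (HR1 : forall k, K k -> mdist (fst k) x0 <= R1).
  { intros k hk. eapply Rle_trans; [apply HR0; auto | apply Rmax_r]. }
  destruct (INR_unbounded ((D + R1) / tau)) as [J HJ].
  assert (HJ' : D + R1 < INR J * tau).
  { apply Rmult_lt_compat_r with (r := tau) in HJ; auto. unfold Rdiv in HJ.
    rewrite Rmult_assoc, Rinv_l in HJ by lra. lra. }
  assert (deltann : 0 <= delta) by apply mdist_nonneg.
  assert (C0pos : 0 < C0).
  { unfold C0. pose proof (Rmax_l (mdist (gX t x0) x0) (mdist (gX (inv t) x0) x0)).
    pose proof (mdist_nonneg X (gX t x0) x0). lra. }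
  exists (C0 + R1 + INR J * delta + 1). split.
  { pose proof (pos_INR J). nra. }
  intros x1 hx1.
  destruct (hYs (- hX x1)) as [y1 hy1].
  destruct (Kcov (x1, y1) ltac:(unfold inZ; simpl; lra)) as [a [k [hk Ek]]].
  unfold prod_act in Ek. injection Ek as Ek1 _.
  assert (d1 : mdist x1 (gX a x0) <= R1).
  { rewrite <- Ek1, adist. apply HR1; auto. }
  destruct (NFT a) as [m [n [s [hs [Ea [Ta _]]]]]].
  set (ca := INR m * - tau + 0 + INR n * tau) in Ta.
  assert (hca : ca <= D + R1).
  { rewrite <- (h0 a ca Ta). pose proof (hXlip x1 (gX a x0)).
    pose proof (Rle_abs (hX x1)). rewrite Rabs_minus_sym in H0.
    pose proof (Rle_abs (hX (gX a x0) - hX x1)). lra. }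
  set (b := mul a (pw G mul one (inv t) J)).
  assert (Tb : TT b (ca + INR J * - tau)) by (apply Tm; auto).
  destruct (NFT b) as [m' [n' [s' [hs' [Eb [Tb' Rb0]]]]]].
  pose proof (T_uniq X hX G gX b _ _ x0 Tb Tb') as Ec.
  assert (Rb : RR (gX b x0)).
  { rewrite Eb. apply (Asc n' _ (INR m' * - tau + 0)); [exact Rb0 | apply Tm; [apply Tp; auto| apply Ts; auto] | idtac]. clearbody ca. lra. }
  assert (d2 : mdist x1 (gX b x0) <= R1 + INR J * delta).
  { unfold b. rewrite comp. pose proof (mdist_tri X x1 (gX a x0) (gX a (gX (pw G mul one (inv t) J) x0))).
    rewrite (adist a x0), (mdist_sym X x0) in H0. pose proof (dpw J). lra. }
  destruct (Reach_seq X hX C0 x0 _ Rb) as [nn [p [p0 [pn [pd ph]]]]].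
  exists (S nn), (fun i => match i with O => x1 | S j => p j end). repeat split; auto.
  - intros i hi. destruct i.
    + rewrite p0. pose proof (pos_INR J). nra.
    + pose proof (pd i ltac:(lia)). pose proof (pos_INR J). nra.
  - intros i hi. destruct i. lia. apply ph. lia.
Qed.
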